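(* Consider the single-hop VAoI system described in the context, operated under the randomized stationary policy with transmission probability $\alpha\in(0,1]$. Then the steady-state probability $\mu_n$ that the VAoI equals $n$ is \[ \mu_n=\begin{cases}\dfrac{\alpha p_s(1-p_g)}{\beta}, & n=0,\\[2mm] \dfrac{\alpha p_s p_g}{\beta^2}, & n=1,\\[2mm] \left[\dfrac{(1-\alpha p_s)p_g}{\beta}\right]^{n-1}\mu_1, & n\ge 2,\end{cases} \] where $\beta=1-(1-\alpha p_s)(1-p_g)$.
   Context: Time is slotted, $t\in\{0,1,2,\dots\}$. An information source generates a new version in each slot independently with probability $p_g$; let $G_t\in\{0,1\}$ indicate whether a new version is generated in slot $t$, so the source version index satisfies $V_S(t+1)=V_S(t)+G_t$. A transmitter always holding the current source version may, in each slot $t$, attempt to send it to a receiver over an erasure channel; $a(t)\in\{0,1\}$ indicates an attempt, and each attempt succeeds independently with probability $p_s$. The Version Age of Information (VAoI) at the receiver is $\Delta(t)=V_S(t)-V_R(t)$, where $V_R(t)$ is the version index stored at the receiver; it evolves as $\Delta(t+1)=G_t$ if $a(t)=1$ and the attempt succeeds, and $\Delta(t+1)=\Delta(t)+G_t$ otherwise. All version-generation and channel events are mutually independent. Assume $0<p_s<1$ and $0<p_g<1$. Under the randomized stationary policy with transmission probability $\alpha$, the actions $a(t)$ are i.i.d. Bernoulli$(\alpha)$, independent of everything else; then $\Delta(t)$ is an ergodic Markov chain on $\{0,1,2,\dots\}$ and $\mu_n$ denotes its stationary probability of state $n$. *)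

(* Defs.v *)
From Stdlib Require Import Reals.
From Coquelicot Require Import Coquelicot.
Open Scope R_scope.

Definition bern (p : R) (b : bool) : R := if b then p else 1 - p.

(* One-slot VAoI update: Delta(t+1) = G_t if a(t)=1 and the attempt succeeds,
   Delta(t) + G_t otherwise. *)
Definition vaoi_step (d : nat) (a s g : bool) : nat :=
  if andb a s then Nat.b2n g else (d + Nat.b2n g)%nat.

(* One-step transition probability P(m -> n) of Delta(t) under the randomized
   stationary policy: a ~ Bern(alpha), success ~ Bern(p_s), G ~ Bern(p_g),
   all independent. *)
Definition vaoi_trans (alpha ps pg : R) (m n : nat) : R :=
  let ind (k : nat) := if Nat.eqb k n then 1 else 0 in
  let f a s g := bern alpha a * bern ps s * bern pg g * ind (vaoi_step m a s g) in
  f true true true + f true true false + f true false true + f true false false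
  + f false true true + f false true false + f false false true + f false false false.

Definition stationary (P : nat -> nat -> R) (mu : nat -> R) : Prop :=
  (forall n, 0 <= mu n) /\ is_series mu 1 /\
  (forall n, is_series (fun m => mu m * P m n) (mu n)).

Definition beta (alpha ps pg : R) : R := 1 - (1 - alpha * ps) * (1 - pg).

Definition mu_formula (alpha ps pg : R) (n : nat) : R :=
  let b := beta alpha ps pg in
  let mu1 := alpha * ps * pg / b ^ 2 in
  match n with
  | O => alpha * ps * (1 - pg) / b
  | S O => mu1
  | S (S k) => ((1 - alpha * ps) * pg / b) ^ (S k) * mu1
  end.

(* Main.v *)
Require Import Defs.
From Stdlib Require Import Reals Lra Lia.
From Coquelicot Require Import Coquelicot.
Open Scope R_scope.

Definition indq (k n : nat) : R := if Nat.eqb k n then 1 else 0.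

Lemma trans_eq (alpha ps pg : R) m n :
  vaoi_trans alpha ps pg m n =
  alpha*ps*(1-pg) * indq 0 n + alpha*ps*pg * indq 1 n
  + (1-alpha*ps)*(1-pg) * indq m n + (1-alpha*ps)*pg * indq (S m) n.
Proof.
  unfold vaoi_trans, vaoi_step, bern; simpl.
  rewrite Nat.add_0_r, Nat.add_1_r. fold (indq 0 n) (indq 1 n) (indq m n) (indq (S m) n).
  change (if match n with 1%nat => true | _ => false end then 1 else 0) with (indq 1 n).
  change (if match n with 0%nat => true | _ => false end then 1 else 0) with (indq 0 n).
  ring.
Qed.

Lemma delta_series (n : nat) (x : R) :
  is_series (fun m => if Nat.eqb m n then x else 0) x.
Proof.
  pose (aa := (fun m => if Nat.eqb m n then x else 0)).
  assert (H : forall N, sum_n aa N = if Nat.ltb N n then 0 else x).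
  { intro N; rewrite sum_n_Reals. induction N as [|N IH].
    - simpl. unfold aa. destruct n; simpl; reflexivity.
    - simpl. rewrite IH. unfold aa.
      destruct (Nat.ltb_spec N n), (Nat.ltb_spec (S N) n), (Nat.eqb_spec (S N) n);
        try lia; lra. }
  change (is_lim_seq (sum_n aa) x).
  apply (is_lim_seq_ext_loc (fun _ => x)).
  - exists n. intros N HN. rewrite H. destruct (Nat.ltb_spec N n); [lia|reflexivity].
  - apply is_lim_seq_const.
Qed.

Definition prev (mu : nat -> R) (n : nat) : R := match n with O => 0 | S k => mu k end.

Lemma series_trans (alpha ps pg : R) (mu : nat -> R) (S0 : R) :
  is_series mu S0 -> forall n,
  is_series (fun m => mu m * vaoi_trans alpha ps pg m n)
   (alpha*ps*(1-pg) * indq 0 n * S0 + alpha*ps*pg * indq 1 n * S0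
    + (1-alpha*ps)*(1-pg) * mu n + (1-alpha*ps)*pg * prev mu n).
Proof.
  intros HS n.
  pose (A := alpha*ps*(1-pg) * indq 0 n + alpha*ps*pg * indq 1 n).
  pose (B := (1-alpha*ps)*(1-pg)). pose (C := (1-alpha*ps)*pg).
  assert (H1 : is_series (fun m => mu m * A) (S0 * A)) by (apply is_series_scal_r; exact HS).
  assert (H2 : is_series (fun m => if Nat.eqb m n then B * mu n else 0) (B * mu n))
    by apply delta_series.
  assert (H3 : is_series (fun m => if Nat.eqb (S m) n then C * prev mu n else 0) (C * prev mu n)).
  { destruct n as [|k].
    - replace (C * prev mu 0) with 0 by (simpl; ring).
      eapply is_series_ext; [|apply (delta_series 0 0)].
      intro m; simpl. destruct (Nat.eqb m 0); simpl; ring.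
    - eapply is_series_ext; [|apply (delta_series k (C * mu k))].
      intro m; simpl. reflexivity. }
  pose proof (is_series_plus _ _ _ _ (is_series_plus _ _ _ _ H1 H2) H3) as H.
  eapply is_series_ext; [|
  replace (alpha*ps*(1-pg) * indq 0 n * S0 + alpha*ps*pg * indq 1 n * S0
    + (1-alpha*ps)*(1-pg) * mu n + (1-alpha*ps)*pg * prev mu n)
   with (plus (plus (S0 * A) (B * mu n)) (C * prev mu n)); [exact H|]].
  - intro m. rewrite trans_eq. unfold A, B, C, indq.
    destruct (Nat.eqb_spec m n), (Nat.eqb_spec (S m) n); subst; unfold plus; simpl; try lia; ring.
  - unfold plus, A, B, C; simpl. ring.
Qed.

Lemma formula_S alpha ps pg k :
  mu_formula alpha ps pg (S k) =
  ((1 - alpha * ps) * pg / beta alpha ps pg) ^ k * (alpha * ps * pg / beta alpha ps pg ^ 2).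
Proof. destruct k; [simpl; ring | reflexivity]. Qed.

Theorem proposition1 (alpha ps pg : R)
  (Hps : 0 < ps < 1) (Hpg : 0 < pg < 1) (Halpha : 0 < alpha <= 1) :
  forall mu : nat -> R,
    stationary (vaoi_trans alpha ps pg) mu <->
    (forall n : nat, mu n = mu_formula alpha ps pg n).
Proof.
  intro mu.
  assert (Hr : 0 < alpha * ps < 1).
  { split; [nra|]. assert (alpha * ps <= ps) by nra. lra. }
  assert (Hq : 0 < (1 - alpha*ps)*(1-pg) < 1) by (split; nra).
  assert (Hb0 : 0 < beta alpha ps pg) by (unfold beta; nra).
  assert (Hb : beta alpha ps pg = 1 - (1 - alpha*ps)*(1-pg)) by reflexivity.
  assert (Hform0 : mu_formula alpha ps pg 0 = alpha * ps * (1 - pg) / beta alpha ps pg) by reflexivity.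
  pose proof (formula_S alpha ps pg) as FS.
  assert (Hc0 : 0 <= (1 - alpha * ps) * pg / beta alpha ps pg).
  { apply Rmult_le_pos; [nra | left; apply Rinv_0_lt_compat; lra]. }
  assert (Hc1 : (1 - alpha * ps) * pg / beta alpha ps pg < 1).
  { apply (Rmult_lt_reg_r (beta alpha ps pg)); [lra|].
    unfold Rdiv; rewrite Rmult_assoc, Rinv_l by lra. rewrite Hb. nra. }
  split.
  - intros [Hnn [HS HP]].
    assert (E : forall n, mu n =
      alpha*ps*(1-pg) * indq 0 n * 1 + alpha*ps*pg * indq 1 n * 1
      + (1-alpha*ps)*(1-pg) * mu n + (1-alpha*ps)*pg * prev mu n).
    { intro n. rewrite <- (is_series_unique _ _ (HP n)) at 1.
      apply is_series_unique. apply series_trans. exact HS. }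
    pose proof (E 0%nat) as E0. pose proof (E 1%nat) as E1.
    unfold indq, prev in E0, E1; simpl in E0, E1.
    assert (M0 : mu 0%nat = alpha * ps * (1 - pg) / beta alpha ps pg).
    { apply (Rmult_eq_reg_r (beta alpha ps pg)); [|lra].
      unfold Rdiv; rewrite Rmult_assoc, Rinv_l by lra. rewrite Hb. lra. }
    assert (M1 : mu 1%nat = alpha * ps * pg / beta alpha ps pg ^ 2).
    { apply (Rmult_eq_reg_r (beta alpha ps pg ^ 2)); [|apply pow_nonzero; lra].
      unfold Rdiv; rewrite Rmult_assoc, Rinv_l by (apply pow_nonzero; lra).
      assert (mu 1%nat * beta alpha ps pg = alpha*ps*pg + (1-alpha*ps)*pg*mu 0%nat)
        by (rewrite Hb; lra).
      rewrite M0 in H. simpl. rewrite Rmult_1_r, <- Rmult_assoc, H.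
      field_simplify; [|lra]. rewrite Hb. field. }
    assert (MS : forall k, mu (S k) = ((1 - alpha * ps) * pg / beta alpha ps pg) ^ k * mu 1%nat).
    { induction k as [|k IH]; [simpl; ring|].
      pose proof (E (S (S k))) as Ek. unfold indq, prev in Ek; simpl in Ek.
      simpl pow. rewrite Rmult_assoc, <- IH.
      apply (Rmult_eq_reg_r (beta alpha ps pg)); [|lra].
      replace ((1 - alpha * ps) * pg / beta alpha ps pg * mu (S k) * beta alpha ps pg)
        with ((1 - alpha * ps) * pg * mu (S k)) by (field; lra).
      rewrite Hb. lra. }
    intro n; destruct n as [|k]; [rewrite Hform0; exact M0|].
    rewrite FS, MS, M1. reflexivity.
  - intro Hf.
    assert (MS : forall k, mu (S k) = ((1 - alpha * ps) * pg / beta alpha ps pg) ^ k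
                   * (alpha * ps * pg / beta alpha ps pg ^ 2)) by (intro k; rewrite Hf, FS; reflexivity).
    assert (M0 : mu 0%nat = alpha * ps * (1 - pg) / beta alpha ps pg) by (rewrite Hf; exact Hform0).
    assert (HS : is_series mu 1).
    { apply is_series_decr_1.
      eapply is_series_ext; [intro k; symmetry; apply MS|].
      change (plus 1 (opp (mu 0%nat))) with (1 - mu 0%nat).
      replace (1 - mu 0%nat) with
        (/ (1 - (1 - alpha * ps) * pg / beta alpha ps pg) * (alpha * ps * pg / beta alpha ps pg ^ 2)).
      + apply is_series_scal_r. apply is_series_geom. rewrite Rabs_pos_eq; lra.
      + rewrite M0. rewrite Hb. field. split; [|lra]. nra. }
    split; [|split; [exact HS|]].
    + intro n; destruct n as [|k].
      * rewrite M0. apply Rmult_le_pos; [nra | left; apply Rinv_0_lt_compat; lra].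
      * rewrite MS. apply Rmult_le_pos; [apply pow_le; lra|].
        apply Rmult_le_pos; [nra | left; apply Rinv_0_lt_compat, pow_lt; lra].
    + intro n. pose proof (series_trans alpha ps pg mu 1 HS n) as H.
      replace (mu n) with (alpha*ps*(1-pg) * indq 0 n * 1 + alpha*ps*pg * indq 1 n * 1
      + (1-alpha*ps)*(1-pg) * mu n + (1-alpha*ps)*pg * prev mu n); [exact H|].
      destruct n as [|[|k]]; unfold indq, prev; simpl.
      * rewrite M0, Hb. field. lra.
      * rewrite M0, (MS 0%nat), Hb. simpl. field. lra.
      * rewrite !MS. simpl pow. rewrite Hb. field. lra.
Qed.
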